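(* Let $\{\triangleright\} \subseteq \sigma \subseteq \{\triangleright, ;, \wedge, \mathrm{upd}, \sqcup, \mathsf{D}, \mathsf{A}\}$ and let $\mathcal{K}$ be the class of $\sigma$-algebras that have a meet-complete representation by partial functions. Then $\mathcal{K}$ is not closed under subalgebras, not closed under unions of directed families of algebras (directed unions), and not closed under homomorphic images. Consequently $\mathcal{K}$ is not axiomatisable by any universal first-order theory, by any universal-existential first-order theory, or by any positive first-order theory.
   Context: The operations are interpreted on partial functions on a base set $X$ as: $f \triangleright g = \{(x,y) \in g : x \notin \mathrm{dom}(f)\}$ (antidomain restriction); $f;g = \{(x,z):\exists y\,((x,y)\in f,(y,z)\in g)\}$ (composition); $f\wedge g = f\cap g$; $\mathrm{upd}(f,g)(x)$ is $f(x)$ if $f(x)$ defined and $g(x)$ undefined, $g(x)$ if both defined, undefined otherwise (update); $(f\sqcup g)(x)$ is $f(x)$ if defined, else $g(x)$ (preferential union); $\mathsf{D}(f)$ = identity on $\mathrm{dom}(f)$; $\mathsf{A}(f)$ = identity on $X\setminus\mathrm{dom}(f)$. A representation by partial functions is an isomorphism onto a $\sigma$-algebra of partial functions with these operations. Define $0 := a\triangleright a$, $a\lhd b := (a\triangleright b)\triangleright b$, $a \le b :\iff a\lhd b = a$; for representable algebras this is a partial order and $a\le b\iff\theta(a)\subseteq\theta(b)$. A representation $\theta$ is meet complete if for every nonempty $S$ with $\bigwedge S$ existing in $(\mathcal{A},\le)$, $\theta(\bigwedge S)=\bigcap\theta[S]$. *)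

(* Defs.v *)
From Stdlib Require Import Bool.

Set Implicit Arguments.

Inductive op := ORes | OComp | OMeet | OUpd | OPref | ODom | OAnt.

Definition signature := op -> bool.

(* ---------- Algebras ----------
   An algebra carries interpretations of all seven symbols; for a signature
   sigma, only the symbols in sigma are ever used (by homomorphisms,
   representations, formulas), so an [alg] plays the role of a sigma-algebra
   (its sigma-reduct); the other operations are irrelevant junk. *)
Record alg := Alg {
  car  : Type;
  res  : car -> car -> car;
  comp : car -> car -> car;
  meet : car -> car -> car;
  upd  : car -> car -> car;
  pref : car -> car -> car;
  dom  : car -> car;
  ant  : car -> car
}.

Definition pfun (X : Type) := X -> option X.

Definition pf_res X (f g : pfun X) : pfun X :=
  fun x => match f x with Some _ => None | None => g x end.
Definition pf_comp X (f g : pfun X) : pfun X :=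
  fun x => match f x with Some y => g y | None => None end.
Definition pf_upd X (f g : pfun X) : pfun X :=
  fun x => match f x with
           | None => None
           | Some y => match g x with Some z => Some z | None => Some y end
           end.
Definition pf_pref X (f g : pfun X) : pfun X :=
  fun x => match f x with Some y => Some y | None => g x end.
Definition pf_dom X (f : pfun X) : pfun X :=
  fun x => match f x with Some _ => Some x | None => None end.
Definition pf_ant X (f : pfun X) : pfun X :=
  fun x => match f x with Some _ => None | None => Some x end.
Definition pf_is_meet X (f g h : pfun X) : Prop :=
  forall x y, h x = Some y <-> (f x = Some y /\ g x = Some y).

Definition representation (sigma : signature) (A : alg) (X : Type)
    (theta : car A -> pfun X) : Prop :=
  (forall a b, (forall x, theta a x = theta b x) -> a = b) /\
  (sigma ORes = true -> forall a b x,
      theta (res A a b) x = pf_res (theta a) (theta b) x) /\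
  (sigma OComp = true -> forall a b x,
      theta (comp A a b) x = pf_comp (theta a) (theta b) x) /\
  (sigma OMeet = true -> forall a b,
      pf_is_meet (theta a) (theta b) (theta (meet A a b))) /\
  (sigma OUpd = true -> forall a b x,
      theta (upd A a b) x = pf_upd (theta a) (theta b) x) /\
  (sigma OPref = true -> forall a b x,
      theta (pref A a b) x = pf_pref (theta a) (theta b) x) /\
  (sigma ODom = true -> forall a x, theta (dom A a) x = pf_dom (theta a) x) /\
  (sigma OAnt = true -> forall a x, theta (ant A a) x = pf_ant (theta a) x).

Definition lhd (A : alg) (a b : car A) : car A := res A (res A a b) b.
Definition ale (A : alg) (a b : car A) : Prop := lhd A a b = a.

Definition is_glb (A : alg) (S : car A -> Prop) (m : car A) : Prop :=
  (forall s, S s -> ale A m s) /\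
  (forall l, (forall s, S s -> ale A l s) -> ale A l m).

Definition meet_complete (A : alg) (X : Type) (theta : car A -> pfun X) : Prop :=
  forall S : car A -> Prop, (exists s, S s) ->
  forall m, is_glb A S m ->
  forall x y, theta m x = Some y <-> (forall s, S s -> theta s x = Some y).

Definition inK (sigma : signature) (A : alg) : Prop :=
  exists (X : Type) (theta : car A -> pfun X),
    representation sigma A theta /\ meet_complete A theta.

Definition sigma_hom (sigma : signature) (A B : alg) (f : car A -> car B) : Prop :=
  (sigma ORes = true -> forall a b, f (res A a b) = res B (f a) (f b)) /\
  (sigma OComp = true -> forall a b, f (comp A a b) = comp B (f a) (f b)) /\
  (sigma OMeet = true -> forall a b, f (meet A a b) = meet B (f a) (f b)) /\
  (sigma OUpd = true -> forall a b, f (upd A a b) = upd B (f a) (f b)) /\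
  (sigma OPref = true -> forall a b, f (pref A a b) = pref B (f a) (f b)) /\
  (sigma ODom = true -> forall a, f (dom A a) = dom B (f a)) /\
  (sigma OAnt = true -> forall a, f (ant A a) = ant B (f a)).

(* closed under subalgebras (B embeds into A, i.e. is isomorphic to a
   subalgebra of A) *)
Definition K_closed_sub (sigma : signature) : Prop :=
  forall (A B : alg) (f : car B -> car A),
    (forall x y, f x = f y -> x = y) -> sigma_hom sigma B A f ->
    inK sigma A -> inK sigma B.

Definition K_closed_himg (sigma : signature) : Prop :=
  forall (A B : alg) (f : car A -> car B),
    (forall b, exists a, f a = b) -> sigma_hom sigma A B f ->
    inK sigma A -> inK sigma B.

(* closed under directed unions: U is the union of a nonempty family of
   subalgebras (given as embeddings e i of algebras Af i), directed under
   inclusion, all of them in K *)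
Definition K_closed_dunion (sigma : signature) : Prop :=
  forall (I : Type) (Af : I -> alg) (U : alg) (e : forall i, car (Af i) -> car U),
    inhabited I ->
    (forall i, (forall x y, e i x = e i y -> x = y) /\ sigma_hom sigma (Af i) U (e i)) ->
    (forall i j, exists k,
        (forall a, exists b, e k b = e i a) /\ (forall a, exists b, e k b = e j a)) ->
    (forall u, exists i a, e i a = u) ->
    (forall i, inK sigma (Af i)) ->
    inK sigma U.

Inductive term :=
  | TVar  : nat -> term
  | TRes  : term -> term -> term
  | TComp : term -> term -> term
  | TMeet : term -> term -> term
  | TUpd  : term -> term -> term
  | TPref : term -> term -> term
  | TDom  : term -> term
  | TAnt  : term -> term.

Fixpoint term_ok (sigma : signature) (t : term) : bool :=
  match t with
  | TVar _ => true
  | TRes a b => sigma ORes && term_ok sigma a && term_ok sigma b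
  | TComp a b => sigma OComp && term_ok sigma a && term_ok sigma b
  | TMeet a b => sigma OMeet && term_ok sigma a && term_ok sigma b
  | TUpd a b => sigma OUpd && term_ok sigma a && term_ok sigma b
  | TPref a b => sigma OPref && term_ok sigma a && term_ok sigma b
  | TDom a => sigma ODom && term_ok sigma a
  | TAnt a => sigma OAnt && term_ok sigma a
  end.

Fixpoint eval (A : alg) (env : nat -> car A) (t : term) : car A :=
  match t with
  | TVar n => env n
  | TRes a b => res A (eval A env a) (eval A env b)
  | TComp a b => comp A (eval A env a) (eval A env b)
  | TMeet a b => meet A (eval A env a) (eval A env b)
  | TUpd a b => upd A (eval A env a) (eval A env b)
  | TPref a b => pref A (eval A env a) (eval A env b)
  | TDom a => dom A (eval A env a)
  | TAnt a => ant A (eval A env a)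
  end.

Inductive formula :=
  | FTrue  : formula
  | FFalse : formula
  | FEq    : term -> term -> formula
  | FNot   : formula -> formula
  | FAnd   : formula -> formula -> formula
  | FOr    : formula -> formula -> formula
  | FImp   : formula -> formula -> formula
  | FAll   : nat -> formula -> formula
  | FEx    : nat -> formula -> formula.

Fixpoint formula_ok (sigma : signature) (p : formula) : bool :=
  match p with
  | FTrue | FFalse => true
  | FEq s t => term_ok sigma s && term_ok sigma t
  | FNot q => formula_ok sigma q
  | FAnd q r | FOr q r | FImp q r => formula_ok sigma q && formula_ok sigma r
  | FAll _ q | FEx _ q => formula_ok sigma q
  end.

Definition upd_env (T : Type) (env : nat -> T) (n : nat) (a : T) : nat -> T :=
  fun m => if Nat.eqb m n then a else env m.

Fixpoint sat (A : alg) (env : nat -> car A) (p : formula) : Prop :=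
  match p with
  | FTrue => True
  | FFalse => False
  | FEq s t => eval A env s = eval A env t
  | FNot q => ~ sat A env q
  | FAnd q r => sat A env q /\ sat A env r
  | FOr q r => sat A env q \/ sat A env r
  | FImp q r => sat A env q -> sat A env r
  | FAll n q => forall a : car A, sat A (upd_env env n a) q
  | FEx n q => exists a : car A, sat A (upd_env env n a) q
  end.

Definition holds (A : alg) (p : formula) : Prop := forall env, sat A env p.

Fixpoint qfree (p : formula) : bool :=
  match p with
  | FAll _ _ | FEx _ _ => false
  | FTrue | FFalse | FEq _ _ => true
  | FNot q => qfree q
  | FAnd q r | FOr q r | FImp q r => qfree q && qfree r
  end.

Inductive universal : formula -> Prop :=
  | univ_qf : forall p, qfree p = true -> universal p
  | univ_all : forall n p, universal p -> universal (FAll n p).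

Inductive existential : formula -> Prop :=
  | ex_qf : forall p, qfree p = true -> existential p
  | ex_ex : forall n p, existential p -> existential (FEx n p).

Inductive univ_exist : formula -> Prop :=
  | ae_ex : forall p, existential p -> univ_exist p
  | ae_all : forall n p, univ_exist p -> univ_exist (FAll n p).

Inductive positive : formula -> Prop :=
  | pos_true : positive FTrue
  | pos_false : positive FFalse
  | pos_eq : forall s t, positive (FEq s t)
  | pos_and : forall p q, positive p -> positive q -> positive (FAnd p q)
  | pos_or : forall p q, positive p -> positive q -> positive (FOr p q)
  | pos_all : forall n p, positive p -> positive (FAll n p)
  | pos_ex : forall n p, positive p -> positive (FEx n p).

Definition axiomatisable_by (sigma : signature) (kind : formula -> Prop) : Prop :=
  exists T : formula -> Prop,
    (forall p, T p -> kind p /\ formula_ok sigma p = true) /\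
    (forall A : alg, inK sigma A <-> (forall p, T p -> holds A p)).

(* Main.v *)
Require Import Defs.
From Stdlib Require Import Bool Arith Lia List ProofIrrelevance FunctionalExtensionality ClassicalEpsilon Classical.

Lemma not_inK (sigma : signature) (Hres : sigma ORes = true) (A : alg) (a : car A)
 (Hnz : a <> res A a a)
 (P1 : forall l, ale A l a -> ale A l (res A l a) -> l = res A a a)
 (P2 : forall l, l <> res A a a -> exists c, ~ ale A l (res A c l) /\ ~ ale A l (lhd A c l)) :
 ~ inK sigma A.
Proof.
  intros [X [th [[Hinj [Hr _]] Hmc]]]. specialize (Hr Hres).
  set (z := res A a a) in *.
  assert (thz : forall x, th z x = None).
  { intro x. unfold z. repeat (rewrite Hr || unfold pf_res). destruct (th a x); auto. }
  assert (Hlow : forall s, ale A z s).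
  { intro s. unfold ale, lhd. apply Hinj. intro x. repeat (rewrite Hr || unfold pf_res).
    rewrite thz. destruct (th s x); auto. }
  assert (Hex : exists x y, th a x = Some y).
  { apply NNPP. intro Hn. apply Hnz. apply Hinj. intro x. rewrite thz.
    destruct (th a x) eqn:E; auto. exfalso. apply Hn. eauto. }
  destruct Hex as [x [y Hxy]].
  set (S := fun s => th s x = Some y).
  assert (Hglb : is_glb A S z).
  { split. intros s _. apply Hlow.
    intros l Hl.
    assert (Hla : ale A l a) by (apply Hl; exact Hxy).
    destruct (th l x) as [y'|] eqn:El.
    - assert (Ely : th l x = Some y).
      { pose proof (f_equal (fun t => th t x) Hla) as E. simpl in E.
        unfold lhd in E. repeat (rewrite Hr in E || unfold pf_res in E). rewrite El, Hxy in E.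
        simpl in E. rewrite El. congruence. }
      destruct (classic (l = z)) as [->|Hne]. apply Hlow.
      destruct (P2 l Hne) as [c [Hc1 Hc2]]. exfalso.
      destruct (th c x) eqn:Ec.
      + apply Hc2. apply Hl. unfold S, lhd. repeat (rewrite Hr || unfold pf_res). rewrite Ec, Ely. reflexivity.
      + apply Hc1. apply Hl. unfold S. repeat (rewrite Hr || unfold pf_res). rewrite Ec, Ely. reflexivity.
    - assert (l = z). { apply P1. exact Hla. apply Hl. unfold S. repeat (rewrite Hr || unfold pf_res). rewrite El. exact Hxy. }
      subst l. apply Hlow. }
  pose proof (proj2 (Hmc S (ex_intro _ a Hxy) z Hglb x y) (fun s Hs => Hs)) as H.
  rewrite thz in H. discriminate.
Qed.

Section SetAlg.
Variable X : Type.
Variable P : (X -> bool) -> Prop.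
Hypothesis H2 : forall (g : bool -> bool -> bool) a b, P a -> P b -> P (fun x => g (a x) (b x)).
Hypothesis H1 : forall (g : bool -> bool) a, P a -> P (fun x => g (a x)).
Definition SA := {S : X -> bool | P S}.
Definition lift2 (g : bool->bool->bool) (a b : SA) : SA :=
  exist _ (fun x => g (proj1_sig a x) (proj1_sig b x)) (H2 g _ _ (proj2_sig a) (proj2_sig b)).
Definition lift1 (g : bool -> bool) (a : SA) : SA :=
  exist _ (fun x => g (proj1_sig a x)) (H1 g _ (proj2_sig a)).
Definition setalg : alg := {| car := SA; res := lift2 (fun u v => negb u && v);
  comp := lift2 andb; meet := lift2 andb; upd := lift2 (fun u v => u);
  pref := lift2 orb; dom := lift1 (fun u => u); ant := lift1 negb |}.

Lemma sig_ext (a b : SA) : (forall x, proj1_sig a x = proj1_sig b x) -> a = b.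
Proof.
  destruct a as [a Ha], b as [b Hb]; simpl; intro E.
  assert (a = b) by (apply functional_extensionality; auto). subst.
  f_equal. apply proof_irrelevance.
Qed.

Lemma ale_iff (l s : SA) : ale setalg l s <-> forall x, proj1_sig l x = true -> proj1_sig s x = true.
Proof.
  unfold ale, lhd. split.
  - intros E x Hl. apply (f_equal (fun t : SA => proj1_sig t x)) in E. cbn in E.
    rewrite Hl in E. destruct (proj1_sig s x); simpl in E; auto.
  - intros H. apply sig_ext. intro x. cbn.
    destruct (proj1_sig l x) eqn:E; [rewrite (H x E)|]; destruct (proj1_sig s x); reflexivity.
Qed.

Lemma P1_gen (a l : SA) : ale setalg l a -> ale setalg l (res setalg l a) -> l = res setalg a a.
Proof.
  rewrite !ale_iff. intros Ha Hb. apply sig_ext. intro x. cbn.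
  destruct (proj1_sig l x) eqn:E.
  - specialize (Hb x E). cbn in Hb. rewrite E in Hb. discriminate.
  - destruct (proj1_sig a x); reflexivity.
Qed.

Definition th (a : SA) : pfun X := fun x => if proj1_sig a x then Some x else None.

Lemma th_rep sigma : representation sigma setalg th.
Proof.
  unfold representation, th. repeat split; intros; cbn.
  - apply sig_ext. intro x. specialize (H x).
    destruct (proj1_sig a x), (proj1_sig b x); congruence.
  - unfold pf_res. destruct (proj1_sig a x), (proj1_sig b x); reflexivity.
  - unfold pf_comp. destruct (proj1_sig a x), (proj1_sig b x); reflexivity.
  - cbn in H0. destruct (proj1_sig a x), (proj1_sig b x); simpl in *; congruence.
  - cbn in H0. destruct (proj1_sig a x), (proj1_sig b x); simpl in *; congruence.
  - destruct H0 as [H0 H3]. destruct (proj1_sig a x), (proj1_sig b x); simpl in *; congruence.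
  - unfold pf_upd. destruct (proj1_sig a x), (proj1_sig b x); reflexivity.
  - unfold pf_pref. destruct (proj1_sig a x), (proj1_sig b x); reflexivity.
  - unfold pf_dom. destruct (proj1_sig a x); reflexivity.
  - unfold pf_ant. destruct (proj1_sig a x); reflexivity.
Qed.

Definition crit : Prop := forall (S : SA -> Prop) (p : X), (forall s, S s -> proj1_sig s p = true) ->
  exists l : SA, proj1_sig l p = true /\ forall s, S s -> forall x, proj1_sig l x = true -> proj1_sig s x = true.

Lemma inK_crit sigma : crit -> inK sigma setalg.
Proof.
  intro Hc. exists X, th. split. apply th_rep.
  intros S [s0 Hs0] m [Hlb Hgr] x y. unfold th. split.
  - intros Hm s Hs. destruct (proj1_sig m x) eqn:E; [|discriminate].
    rewrite (proj1 (ale_iff m s) (Hlb s Hs) x E). exact Hm.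
  - intros Hall. pose proof (Hall s0 Hs0) as E0.
    destruct (proj1_sig s0 x) eqn:E; [|discriminate]. injection E0 as <-.
    destruct (Hc S x) as [l [Hl1 Hl2]].
    { intros s Hs. specialize (Hall s Hs). destruct (proj1_sig s x); congruence. }
    assert (ale setalg l m). { apply Hgr. intros s Hs. apply ale_iff. apply Hl2; auto. }
    rewrite (proj1 (ale_iff l m) H x Hl1). reflexivity.
Qed.
End SetAlg.

Lemma hom_same X P Q H2 H1 H2' H1' (f : SA X P -> SA X Q)
  (Hf : forall a, proj1_sig (f a) = proj1_sig a) sigma :
  sigma_hom sigma (setalg X P H2 H1) (setalg X Q H2' H1') f.
Proof.
  unfold sigma_hom. repeat split; intros; apply sig_ext; intro x; rewrite Hf; cbn; rewrite ?Hf; reflexivity.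
Qed.

Definition C := nat -> bool.
Definition det (n : nat) (S : C -> bool) : Prop :=
  forall x y : C, (forall k, k < n -> x k = y k) -> S x = S y.
Definition clopen (S : C -> bool) : Prop := exists n, det n S.

Lemma det_mono n m S : n <= m -> det n S -> det m S.
Proof. intros Hnm H x y Hxy. apply H. intros k Hk. apply Hxy. lia. Qed.

Lemma det2 n : forall (g : bool -> bool -> bool) a b, det n a -> det n b -> det n (fun x => g (a x) (b x)).
Proof. intros g a b Ha Hb x y H. rewrite (Ha x y H), (Hb x y H). reflexivity. Qed.
Lemma det1 n : forall (g : bool -> bool) a, det n a -> det n (fun x => g (a x)).
Proof. intros g a Ha x y H. rewrite (Ha x y H). reflexivity. Qed.
Lemma clo2 : forall (g : bool -> bool -> bool) a b, clopen a -> clopen b -> clopen (fun x => g (a x) (b x)).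
Proof. intros g a b [n Ha] [m Hb]. exists (max n m). apply det2; [apply (det_mono n) | apply (det_mono m)]; auto; lia. Qed.
Lemma clo1 : forall (g : bool -> bool) a, clopen a -> clopen (fun x => g (a x)).
Proof. intros g a [n Ha]. exists n. apply det1; auto. Qed.

Fixpoint agreeb (p : C) (n : nat) (x : C) : bool :=
  match n with 0 => true | S n' => agreeb p n' x && Bool.eqb (x n') (p n') end.
Lemma agreeb_spec p n x : agreeb p n x = true <-> forall k, k < n -> x k = p k.
Proof.
  induction n; simpl. split; intros; auto; lia.
  rewrite andb_true_iff, IHn. split.
  - intros [H1 H2] k Hk. apply eqb_prop in H2. destruct (Nat.eq_dec k n); subst; auto. apply H1; lia.
  - intros H. split. intros; apply H; lia. apply eqb_true_iff. apply H; lia.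
Qed.
Lemma agreeb_refl p n : agreeb p n p = true.
Proof. apply agreeb_spec. auto. Qed.
Lemma agreeb_det p n : det n (agreeb p n).
Proof.
  intros x y H. destruct (agreeb p n x) eqn:E; symmetry.
  - apply agreeb_spec. intros k Hk. rewrite <- H by auto. apply agreeb_spec with (n:=n); auto.
  - apply not_true_iff_false. intro E2. rewrite agreeb_spec in E2.
    assert (agreeb p n x = true) by (apply agreeb_spec; intros k Hk; rewrite H; auto). congruence.
Qed.

Definition sing (p : C) : C -> bool := fun x => if excluded_middle_informative (x = p) then true else false.
Lemma sing_p p : sing p p = true.
Proof. unfold sing. destruct (excluded_middle_informative (p = p)); congruence. Qed.
Lemma sing_eq p x : sing p x = true -> x = p.
Proof. unfold sing. destruct (excluded_middle_informative (x = p)); congruence. Qed.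

Definition U := setalg C clopen clo2 clo1.
Definition full : SA C clopen := exist _ (fun _ => true) (ex_intro _ 0 (fun x y _ => eq_refl)).

Lemma U_notK sigma : sigma ORes = true -> ~ inK sigma U.
Proof.
  intro Hres. apply (not_inK sigma Hres U full).
  - intro E. apply (f_equal (fun t : SA C clopen => proj1_sig t (fun _ => true))) in E. cbn in E. discriminate.
  - apply P1_gen.
  - intros l Hne.
    destruct (classic (exists x0, proj1_sig l x0 = true)) as [[x0 Hx0]|Hn].
    2:{ exfalso. apply Hne. apply sig_ext. intro x. cbn. destruct (proj1_sig l x) eqn:E; auto. exfalso; eauto. }
    destruct (proj2_sig l) as [n Hn].
    exists (exist _ (agreeb x0 (S n)) (ex_intro _ (S n) (agreeb_det x0 (S n)))).
    unfold U; split; rewrite ale_iff; intro H.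
    + specialize (H x0 Hx0). cbn in H. rewrite agreeb_refl, eqb_reflx in H. discriminate.
    + set (x1 := fun k => if Nat.eqb k n then negb (x0 n) else x0 k).
      assert (Hl1 : proj1_sig l x1 = true).
      { rewrite <- Hx0. apply Hn. intros k Hk. unfold x1. destruct (Nat.eqb_spec k n); [lia|auto]. }
      specialize (H x1 Hl1). cbn in H. rewrite Hl1 in H.
      unfold x1 in H at 2. rewrite Nat.eqb_refl in H. destruct (x0 n); simpl in H; rewrite ?andb_false_r in H; simpl in H; discriminate.
Qed.

Lemma tr2 : forall (g : bool -> bool -> bool) (a b : C -> bool), True -> True -> True.
Proof. auto. Qed.
Lemma tr1 : forall (g : bool -> bool) (a : C -> bool), True -> True.
Proof. auto. Qed.
Definition Fu := setalg C (fun _ => True) tr2 tr1.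
Lemma Fu_K sigma : inK sigma Fu.
Proof.
  apply inK_crit. intros S p Hp. exists (exist _ (sing p) I). split. apply sing_p.
  intros s Hs x Hx. cbn in Hx. apply sing_eq in Hx. subst. auto.
Qed.

Lemma not_sub sigma : sigma ORes = true -> ~ K_closed_sub sigma.
Proof.
  intros Hres H. apply (U_notK sigma Hres).
  apply (H Fu U (fun s => exist _ (proj1_sig s) I)).
  - intros a b E. apply sig_ext. intro x. apply (f_equal (fun t : SA C (fun _ => True) => proj1_sig t x)) in E. exact E.
  - apply hom_same. reflexivity.
  - apply Fu_K.
Qed.

Definition Af (n : nat) := setalg C (det n) (det2 n) (det1 n).
Lemma Af_K sigma n : inK sigma (Af n).
Proof.
  apply inK_crit. intros S p Hp. exists (exist _ (agreeb p n) (agreeb_det p n)). split. apply agreeb_refl.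
  intros s Hs x Hx. cbn in Hx. rewrite <- (Hp s Hs). apply (proj2_sig s).
  apply agreeb_spec. auto.
Qed.

Lemma not_dunion sigma : sigma ORes = true -> ~ K_closed_dunion sigma.
Proof.
  intros Hres H. apply (U_notK sigma Hres).
  apply (H nat Af U (fun n s => exist _ (proj1_sig s) (ex_intro _ n (proj2_sig s)))).
  - constructor. exact 0.
  - intro i. split.
    + intros a b E. apply sig_ext. intro x. apply (f_equal (fun t : SA C clopen => proj1_sig t x)) in E. exact E.
    + apply hom_same. reflexivity.
  - intros i j. exists (max i j). split; intro a.
    + exists (exist _ (proj1_sig a) (det_mono i _ _ (Nat.le_max_l i j) (proj2_sig a))). apply sig_ext. reflexivity.
    + exists (exist _ (proj1_sig a) (det_mono j _ _ (Nat.le_max_r i j) (proj2_sig a))). apply sig_ext. reflexivity.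
  - intros [S [n Hn]]. exists n, (exist _ S Hn). apply sig_ext. reflexivity.
  - intro i. apply Af_K.
Qed.

Definition nwd (S : C -> bool) : Prop :=
  forall (p : C) (n : nat), exists (q : C) (m : nat), n <= m /\ (forall k, k < n -> q k = p k) /\
    (forall y, (forall k, k < m -> y k = q k) -> S y = false).

Lemma nwd_sub S T : (forall x, S x = true -> T x = true) -> nwd T -> nwd S.
Proof.
  intros H HT p n. destruct (HT p n) as [q [m [H1 [H2 H3]]]]. exists q, m. repeat split; auto.
  intros y Hy. specialize (H3 y Hy). destruct (S y) eqn:E; auto. rewrite (H y E) in H3. discriminate.
Qed.

Lemma nwd_union S T : nwd S -> nwd T -> nwd (fun x => S x || T x).
Proof.
  intros HS HT p n. destruct (HS p n) as [q1 [m1 [A1 [A2 A3]]]].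
  destruct (HT q1 m1) as [q2 [m2 [B1 [B2 B3]]]]. exists q2, m2. repeat split.
  - lia.
  - intros k Hk. rewrite B2 by lia. auto.
  - intros y Hy. rewrite B3 by auto. rewrite A3. reflexivity.
    intros k Hk. rewrite Hy by lia. auto.
Qed.

Lemma nwd_empty : nwd (fun _ => false).
Proof. intros p n. exists p, n. repeat split; auto. Qed.

Lemma nwd_sing p0 : nwd (sing p0).
Proof.
  intros p n. exists (fun k => if Nat.ltb k n then p k else negb (p0 k)), (S n). repeat split.
  - lia.
  - intros k Hk. apply Nat.ltb_lt in Hk. rewrite Hk. auto.
  - intros y Hy. destruct (sing p0 y) eqn:E; auto. apply sing_eq in E. subst y.
    specialize (Hy n (Nat.lt_succ_diag_r n)). rewrite Nat.ltb_irrefl in Hy.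
    destruct (p0 n); discriminate.
Qed.

Definition rep (S D : C -> bool) : Prop := clopen D /\ nwd (fun x => xorb (S x) (D x)).

Lemma xorb_false_eq u v : xorb u v = false -> u = v.
Proof. destruct u, v; simpl; congruence. Qed.

Lemma rep2 (g : bool -> bool -> bool) a b Da Db : rep a Da -> rep b Db ->
  rep (fun x => g (a x) (b x)) (fun x => g (Da x) (Db x)).
Proof.
  intros [Ca Na] [Cb Nb]. split. apply clo2; auto.
  eapply nwd_sub; [|apply (nwd_union _ _ Na Nb)]. intros x Hx. cbn in Hx |- *.
  destruct (xorb (a x) (Da x)) eqn:E1; auto. destruct (xorb (b x) (Db x)) eqn:E2; auto.
  apply xorb_false_eq in E1, E2. rewrite E1, E2, xorb_nilpotent in Hx. discriminate.
Qed.
Lemma rep1 (g : bool -> bool) a Da : rep a Da -> rep (fun x => g (a x)) (fun x => g (Da x)).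
Proof.
  intros [Ca Na]. split. apply clo1; auto.
  eapply nwd_sub; [|apply Na]. intros x Hx. cbn in Hx |- *.
  destruct (xorb (a x) (Da x)) eqn:E1; auto.
  apply xorb_false_eq in E1. rewrite E1, xorb_nilpotent in Hx. discriminate.
Qed.

Lemma clopen_nwd_eq D1 D2 : clopen D1 -> clopen D2 -> nwd (fun x => xorb (D1 x) (D2 x)) -> forall x, D1 x = D2 x.
Proof.
  intros [n1 H1] [n2 H2] N x. destruct (N x (max n1 n2)) as [q [m [A1 [A2 A3]]]].
  specialize (A3 q (fun k _ => eq_refl)).
  rewrite (H1 x q), (H2 x q). apply xorb_false_eq; auto.
  all: intros k Hk; rewrite A2; auto; lia.
Qed.

Lemma rep_uniq S D1 D2 : rep S D1 -> rep S D2 -> forall x, D1 x = D2 x.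
Proof.
  intros [C1 N1] [C2 N2]. apply clopen_nwd_eq; auto.
  eapply nwd_sub; [|apply (nwd_union _ _ N1 N2)]. intros x Hx. simpl.
  destruct (S x), (D1 x), (D2 x); simpl in *; auto.
Qed.

Definition Pm (S : C -> bool) : Prop := exists D, rep S D.
Lemma Pm2 : forall (g : bool -> bool -> bool) a b, Pm a -> Pm b -> Pm (fun x => g (a x) (b x)).
Proof. intros g a b [Da Ha] [Db Hb]. eexists. apply rep2; eauto. Qed.
Lemma Pm1 : forall (g : bool -> bool) a, Pm a -> Pm (fun x => g (a x)).
Proof. intros g a [Da Ha]. eexists. apply rep1; eauto. Qed.

Definition M := setalg C Pm Pm2 Pm1.

Lemma M_K sigma : inK sigma M.
Proof.
  apply inK_crit. intros S p Hp.
  assert (Pm (sing p)).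
  { exists (fun _ => false). split. exists 0. intros x y _. reflexivity.
    eapply nwd_sub; [|apply (nwd_sing p)]. intros x. rewrite xorb_false_r. auto. }
  exists (exist _ (sing p) H). split. apply sing_p.
  intros s Hs x Hx. cbn in Hx. apply sing_eq in Hx. subst. auto.
Qed.

Definition fD (s : SA C Pm) : C -> bool := proj1_sig (constructive_indefinite_description _ (proj2_sig s)).
Lemma fD_spec s : rep (proj1_sig s) (fD s).
Proof. unfold fD. apply (proj2_sig (constructive_indefinite_description _ (proj2_sig s))). Qed.
Definition fM (s : SA C Pm) : SA C clopen := exist _ (fD s) (proj1 (fD_spec s)).

Lemma not_himg sigma : sigma ORes = true -> ~ K_closed_himg sigma.
Proof.
  intros Hres H. apply (U_notK sigma Hres).
  apply (H M U fM).
  - intros b. assert (Pm (proj1_sig b)).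
    { exists (proj1_sig b). split. apply (proj2_sig b). eapply nwd_sub; [|apply nwd_empty].
      intros x. rewrite xorb_nilpotent. auto. }
    exists (exist _ (proj1_sig b) H0). apply sig_ext. cbn. apply rep_uniq with (proj1_sig b).
    apply (fD_spec (exist _ (proj1_sig b) H0)).
    split. apply (proj2_sig b). eapply nwd_sub; [|apply nwd_empty]. intros x. rewrite xorb_nilpotent. auto.
  - unfold sigma_hom. repeat split; intros; apply sig_ext; cbn.
    all: eapply rep_uniq; [apply fD_spec|];
    lazymatch goal with
    | |- rep (proj1_sig (lift2 _ _ _ ?g ?a ?b)) _ =>
        apply (rep2 g (proj1_sig a) (proj1_sig b) (fD a) (fD b)); apply fD_spec
    | |- rep (proj1_sig (lift1 _ _ _ ?g ?a)) _ => apply (rep1 g (proj1_sig a) (fD a)); apply fD_spec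
    end.
  - apply M_K.
Qed.

Lemma eval_hom sigma A B f : sigma_hom sigma A B f -> forall env t, term_ok sigma t = true ->
  f (eval A env t) = eval B (fun m => f (env m)) t.
Proof.
  intros [Hr [Hc [Hm [Hu [Hp [Hd Ha]]]]]] env t. induction t; simpl; intro H;
  repeat match goal with H : _ && _ = true |- _ => apply andb_prop in H; let h1 := fresh in let h2 := fresh in destruct H as [h1 h2] end;
  try reflexivity.
  - rewrite Hr by auto. f_equal; auto.
  - rewrite Hc by auto. f_equal; auto.
  - rewrite Hm by auto. f_equal; auto.
  - rewrite Hu by auto. f_equal; auto.
  - rewrite Hp by auto. f_equal; auto.
  - rewrite Hd by auto. f_equal; auto.
  - rewrite Ha by auto. f_equal; auto.
Qed.

Lemma upd_env_comp (A B : Type) (f : A -> B) env n a :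
  (fun m => f (upd_env env n a m)) = upd_env (fun m => f (env m)) n (f a).
Proof. apply functional_extensionality. intro m. unfold upd_env. destruct (Nat.eqb m n); auto. Qed.

Lemma pos_pres sigma A B f : sigma_hom sigma A B f -> (forall b, exists a, f a = b) ->
  forall p, positive p -> formula_ok sigma p = true -> forall env, sat A env p -> sat B (fun m => f (env m)) p.
Proof.
  intros Hh Hs p Hp. induction Hp; simpl; intros Hok env H;
  repeat match goal with H : _ && _ = true |- _ => apply andb_prop in H; let h1 := fresh in let h2 := fresh in destruct H as [h1 h2] end; auto.
  - rewrite <- !(eval_hom sigma A B f Hh) by auto. rewrite H. reflexivity.
  - destruct H; split; auto.
  - destruct H; [left|right]; auto.
  - intro b. destruct (Hs b) as [a <-]. rewrite <- upd_env_comp. auto.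
  - destruct H as [a Ha]. exists (f a). rewrite <- upd_env_comp. auto.
Qed.

Lemma ax_pos_himg sigma : axiomatisable_by sigma positive -> K_closed_himg sigma.
Proof.
  intros [T [HT Hax]] A B f Hs Hh HA. apply Hax. intros p Tp env.
  pose (envA := fun m => proj1_sig (constructive_indefinite_description _ (Hs (env m)))).
  assert (E : (fun m => f (envA m)) = env).
  { apply functional_extensionality. intro m. unfold envA.
    apply (proj2_sig (constructive_indefinite_description _ (Hs (env m)))). }
  rewrite <- E. apply (pos_pres sigma A B f Hh Hs); try apply HT; auto.
  apply (proj1 (Hax A) HA p Tp).
Qed.

Fixpoint tvars (t : term) : list nat :=
  match t with
  | TVar n => n :: nil
  | TRes a b | TComp a b | TMeet a b | TUpd a b | TPref a b => tvars a ++ tvars b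
  | TDom a | TAnt a => tvars a
  end.
Fixpoint fvars (p : formula) : list nat :=
  match p with
  | FTrue | FFalse => nil
  | FEq s t => tvars s ++ tvars t
  | FNot q => fvars q
  | FAnd q r | FOr q r | FImp q r => fvars q ++ fvars r
  | FAll _ q | FEx _ q => fvars q
  end.

Lemma eval_agree A env1 env2 t : (forall m, In m (tvars t) -> env1 m = env2 m) ->
  eval A env1 t = eval A env2 t.
Proof.
  induction t; simpl; intro H; try (f_equal; auto; fail);
  f_equal; first [apply IHt1 | apply IHt2]; intros; apply H; apply in_or_app; auto.
Qed.

Lemma sat_agree A p : forall env1 env2, (forall m, In m (fvars p) -> env1 m = env2 m) ->
  (sat A env1 p <-> sat A env2 p).
Proof.
  induction p; simpl; intros env1 env2 H.
  - tauto.
  - tauto.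
  - rewrite (eval_agree A env1 env2 t), (eval_agree A env1 env2 t0). tauto.
    all: intros; apply H; apply in_or_app; auto.
  - rewrite (IHp env1 env2 H). tauto.
  - rewrite (IHp1 env1 env2), (IHp2 env1 env2). tauto.
    all: intros; apply H; apply in_or_app; auto.
  - rewrite (IHp1 env1 env2), (IHp2 env1 env2). tauto.
    all: intros; apply H; apply in_or_app; auto.
  - rewrite (IHp1 env1 env2), (IHp2 env1 env2). tauto.
    all: intros; apply H; apply in_or_app; auto.
  - split; intros H' a; [apply (IHp (upd_env env1 n a))|apply (IHp (upd_env env2 n a))]; auto;
    intros m Hm; unfold upd_env; destruct (Nat.eqb m n); auto; symmetry; auto.
  - split; intros [a H']; exists a; [apply (IHp (upd_env env1 n a))|apply (IHp (upd_env env2 n a))]; auto;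
    intros m Hm; unfold upd_env; destruct (Nat.eqb m n); auto; symmetry; auto.
Qed.

Lemma qf_iff sigma A B f : (forall x y, f x = f y -> x = y) -> sigma_hom sigma A B f ->
  forall p, qfree p = true -> formula_ok sigma p = true -> forall env,
  (sat A env p <-> sat B (fun m => f (env m)) p).
Proof.
  intros Hi Hh p. induction p; simpl; intros Hq Hok env;
  repeat match goal with H : _ && _ = true |- _ => apply andb_prop in H; let h1 := fresh in let h2 := fresh in destruct H as [h1 h2] end;
  try discriminate.
  - tauto.
  - tauto.
  - rewrite <- !(eval_hom sigma A B f Hh) by auto. split; intro E; [rewrite E; auto | apply Hi; auto].
  - rewrite IHp by auto. tauto.
  - rewrite IHp1, IHp2 by auto. tauto.
  - rewrite IHp1, IHp2 by auto. tauto.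
  - rewrite IHp1, IHp2 by auto. tauto.
Qed.

Lemma ex_pres sigma A B f : (forall x y, f x = f y -> x = y) -> sigma_hom sigma A B f ->
  forall p, existential p -> formula_ok sigma p = true -> forall env,
  sat A env p -> sat B (fun m => f (env m)) p.
Proof.
  intros Hi Hh p Hp. induction Hp; intros Hok env Hs.
  - apply (qf_iff sigma A B f Hi Hh); auto.
  - destruct Hs as [a Ha]. exists (f a). rewrite <- upd_env_comp. apply IHHp; auto.
Qed.

Lemma holds_all A n q : holds A (FAll n q) -> holds A q.
Proof.
  intros H env. specialize (H env (env n)).
  replace (upd_env env n (env n)) with env in H; auto.
  apply functional_extensionality. intro m. unfold upd_env. destruct (Nat.eqb_spec m n); subst; auto.
Qed.

Lemma ax_ue_dunion sigma : axiomatisable_by sigma univ_exist -> K_closed_dunion sigma.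
Proof.
  intros [T [HT Hax]] I Af U e [i0] He Hdir Hun HK. apply Hax. intros p Tp.
  destruct (HT p Tp) as [Hue Hok].
  assert (Hall : forall i, holds (Af i) p) by (intro i; apply (proj1 (Hax (Af i)) (HK i) p Tp)).
  clear Tp. induction Hue.
  - intro env.
    assert (Hk : forall l : list nat, exists k, forall m, In m l -> exists b, e k b = env m).
    { induction l as [|m l IH]. exists i0. simpl. tauto.
      destruct IH as [k Hk]. destruct (Hun (env m)) as [j [a Ha]].
      destruct (Hdir k j) as [k' [Hk1 Hk2]]. exists k'. intros m' [<-|Hm'].
      - destruct (Hk2 a) as [b Hb]. exists b. congruence.
      - destruct (Hk m' Hm') as [b0 Hb0]. destruct (Hk1 b0) as [b Hb]. exists b. congruence. }
    destruct (Hk (0 :: fvars p)) as [k Hk0].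
    destruct (Hk0 0 (or_introl eq_refl)) as [d _].
    pose (envk := fun m => match excluded_middle_informative (exists b, e k b = env m) with
                           | left h => proj1_sig (constructive_indefinite_description _ h)
                           | right _ => d end).
    assert (Ek : forall m, In m (fvars p) -> e k (envk m) = env m).
    { intros m Hm. unfold envk. destruct (excluded_middle_informative _) as [h|h].
      - apply (proj2_sig (constructive_indefinite_description _ h)).
      - exfalso. apply h. apply Hk0. right. auto. }
    apply (sat_agree U p (fun m => e k (envk m)) env Ek).
    apply (ex_pres sigma (Af k) U (e k) (proj1 (He k)) (proj2 (He k))); auto. apply Hall.
  - simpl in Hok. intros env a. apply IHHue; auto.
    intro i. apply (holds_all _ n). auto.
Qed.

Lemma ax_univ_ue sigma : axiomatisable_by sigma universal -> axiomatisable_by sigma univ_exist.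
Proof.
  intros [T [HT Hax]]. exists T. split; auto. intros p Tp. destruct (HT p Tp) as [Hu Hok]. split; auto.
  clear -Hu. induction Hu. apply ae_ex. apply ex_qf. auto. apply ae_all. auto.
Qed.

Theorem proposition4p7 (sigma : signature) (Hres : sigma ORes = true) :
  ~ K_closed_sub sigma /\
  ~ K_closed_dunion sigma /\
  ~ K_closed_himg sigma /\
  ~ axiomatisable_by sigma universal /\
  ~ axiomatisable_by sigma univ_exist /\
  ~ axiomatisable_by sigma positive.
Proof.
  split. apply not_sub; auto.
  split. apply not_dunion; auto.
  split. apply not_himg; auto.
  split. intro H. apply (not_dunion sigma Hres). apply ax_ue_dunion. apply ax_univ_ue. auto.
  split. intro H. apply (not_dunion sigma Hres). apply ax_ue_dunion. auto.
  intro H. apply (not_himg sigma Hres). apply ax_pos_himg. auto.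
Qed.
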